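(* In the setting below, for all $m,n\in\mathbb{Z}$: (1) The automorphism $w=T_1^mT_2^n$ satisfies $(w(\tau_0),w(\tau_1),w(\tau_2))=(\tau_{m,n},\tau_{m+1,n},\tau_{m+1,n+1})$ and $(w(\alpha_0),w(\alpha_1),w(\alpha_2))=(\alpha_0+3m,\alpha_1+3(n-m),\alpha_2-3n)$; the automorphism $w'=T_1^mT_2^ns_1$ satisfies $(w'(\tau_0),w'(\tau_1),w'(\tau_2))=(\tau_{m,n},\tau_{m,n+1},\tau_{m+1,n+1})$ and $(w'(\alpha_0),w'(\alpha_1),w'(\alpha_2))=(\alpha_0+\alpha_1+3n,-\alpha_1+3(m-n),\alpha_1+\alpha_2-3m)$. (2) With $\varphi_i:=\tau_{i+1}'/\tau_{i+1}-\tau_{i+2}'/\tau_{i+2}+x$, $$(w(\varphi_0),w(\varphi_1),w(\varphi_2))=\Big(\frac{\tau_{m,n}\tau_{m+2,n+1}}{\tau_{m+1,n}\tau_{m+1,n+1}},\ \frac{\tau_{m+1,n}\tau_{m,n+1}}{\tau_{m+1,n+1}\tau_{m,n}},\ \frac{\tau_{m+1,n+1}\tau_{m,n-1}}{\tau_{m,n}\tau_{m+1,n}}\Big),$$ $$(w'(\varphi_0),w'(\varphi_1),w'(\varphi_2))=\Big(\frac{\tau_{m,n}\tau_{m+1,n+2}}{\tau_{m,n+1}\tau_{m+1,n+1}},\ \frac{\tau_{m,n+1}\tau_{m+1,n}}{\tau_{m+1,n+1}\tau_{m,n}},\ \frac{\tau_{m+1,n+1}\tau_{m-1,n}}{\t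au_{m,n}\tau_{m,n+1}}\Big).$$
   Context: Indices mod 3. Let $L$ be the field of rational functions over $\mathbb{C}$ in independent indeterminates $\alpha_0,\alpha_1,x,\tau_0,\tau_1,\tau_2,\tau_0',\tau_1',\tau_2'$, with $\alpha_2:=3-\alpha_0-\alpha_1$ and derivation $'$: $\alpha_i'=0$, $x'=1$, $(\tau_i)'=\tau_i'$, $(\tau_i')'=\tau_i(F_i''+(F_i')^2)$ where $F_j'=\tau_j'/\tau_j$ and $F_i''=-x(F_{i+1}'-F_{i+2}')-(F_i'-F_{i+1}')(F_i'-F_{i+2}')-(\alpha_{i+1}-\alpha_{i+2})/3$. The extended affine Weyl group of type $A^{(1)}_2$ acts on $L$ by differential automorphisms $s_0,s_1,s_2,\pi$ with $s_i(x)=\pi(x)=x$, $s_i(\alpha_i)=-\alpha_i$, $s_i(\alpha_j)=\alpha_j+\alpha_i$ ($j\neq i$), $\pi(\alpha_j)=\alpha_{j+1}$, $s_i(\tau_i)=(\tau_{i+1}'\tau_{i+2}-\tau_{i+1}\tau_{i+2}'+x\tau_{i+1}\tau_{i+2})/\tau_i$, $s_i(\tau_j)=\tau_j$ ($j\ne i$), $\pi(\tau_j)=\tau_{j+1}$. Put $T_1=\pi s_2s_1$, $T_2=s_1\pi s_2$ (composition of automorphisms) and $\tau_{m,n}:=T_1^mT_2^n(\tau_0)\in L$ for $m,n\in\mathbb{Z}$. *)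

(* Defs.v *)
From HB Require Import structures.
From mathcomp Require Import all_boot all_order all_algebra.
From mathcomp Require Import fraction.
From mathcomp Require Import mpoly.
From mathcomp Require Import complex.
From mathcomp Require Import reals.

Set Implicit Arguments.
Unset Strict Implicit.
Unset Printing Implicit Defensive.

Import Order.TTheory GRing.Theory Num.Theory.
Local Open Scope ring_scope.

Section Setting.

(* R is the field of real numbers (any realType is isomorphic to it);
   C := R[i] is the field of complex numbers. *)
Variable R : realType.

Definition CC : Type := complex R.

(* Indeterminate k : 'I_9 is: 0 -> alpha_0, 1 -> alpha_1, 2 -> x,
   3+i -> tau_i, 6+i -> tau_i' (i = 0,1,2). *)
Definition L : Type := {fraction {mpoly CC[9]}}.

Definition gen (k : nat) : L := tofrac ('X_(inord k) : {mpoly CC[9]}).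
Definition cst (c : CC) : L := tofrac (mpolyC 9 c).

Definition alpha0 : L := gen 0.
Definition alpha1 : L := gen 1.
Definition xx : L := gen 2.
(* indices mod 3 are elements of 'I_3 with its Z/3Z arithmetic *)
Definition tau (i : 'I_3) : L := gen (3 + i).
Definition taup (i : 'I_3) : L := gen (6 + i).
Definition alpha (i : 'I_3) : L :=
  if val i == 0%N then alpha0 else if val i == 1%N then alpha1
  else 3 - alpha0 - alpha1.

Definition Fp (i : 'I_3) : L := taup i / tau i.
Definition Fpp (i : 'I_3) : L :=
  - xx * (Fp (i + 1) - Fp (i + 2)) - (Fp i - Fp (i + 1)) * (Fp i - Fp (i + 2))
  - (alpha (i + 1) - alpha (i + 2)) / 3.

Definition is_derivation (D : L -> L) : Prop :=
  [/\ forall a b, D (a + b) = D a + D b,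
      forall a b, D (a * b) = D a * b + a * D b &
      forall c, D (cst c) = 0].

Definition derivation_spec (D : L -> L) : Prop :=
  [/\ is_derivation D,
      forall i, D (alpha i) = 0,
      D xx = 1,
      forall i, D (tau i) = taup i &
      forall i, D (taup i) = tau i * (Fpp i + Fp i ^+ 2)].

Definition diff_aut (D : L -> L) (f finv : L -> L) : Prop :=
  [/\ forall a b, f (a + b) = f a + f b,
      forall a b, f (a * b) = f a * f b,
      f 1 = 1 &
      forall c, f (cst c) = cst c] /\
  [/\ cancel f finv,
      cancel finv f &
      forall a, f (D a) = D (f a)].

Definition s_action_spec (i : 'I_3) (s : L -> L) : Prop :=
  [/\ s xx = xx,
      s (alpha i) = - alpha i,
      forall j, j != i -> s (alpha j) = alpha j + alpha i,
      s (tau i) = (taup (i + 1) * tau (i + 2) - tau (i + 1) * taup (i + 2)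
                   + xx * tau (i + 1) * tau (i + 2)) / tau i &
      forall j, j != i -> s (tau j) = tau j].

Definition pi_action_spec (p : L -> L) : Prop :=
  [/\ p xx = xx,
      forall j, p (alpha j) = alpha (j + 1) &
      forall j, p (tau j) = tau (j + 1)].

Definition zpow (f finv : L -> L) (m : int) : L -> L :=
  match m with
  | Posz k => iter k f
  | Negz k => iter k.+1 finv
  end.

Variables (s sinv : 'I_3 -> L -> L) (p pinv : L -> L).

Definition T1 (a : L) : L := p (s 2 (s 1 a)).
Definition T1inv (a : L) : L := sinv 1 (sinv 2 (pinv a)).
Definition T2 (a : L) : L := s 1 (p (s 2 a)).
Definition T2inv (a : L) : L := sinv 2 (pinv (sinv 1 a)).

Definition wmn (m n : int) (a : L) : L := zpow T1 T1inv m (zpow T2 T2inv n a).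
Definition wmn' (m n : int) (a : L) : L := wmn m n (s 1 a).

Definition taumn (m n : int) : L := wmn m n (tau 0).

Definition phi (i : 'I_3) : L :=
  taup (i + 1) / tau (i + 1) - taup (i + 2) / tau (i + 2) + xx.

End Setting.

Arguments gen {R} k.
Arguments cst {R} c.
Arguments alpha0 {R}.
Arguments alpha1 {R}.
Arguments xx {R}.
Arguments tau {R} i.
Arguments taup {R} i.
Arguments alpha {R} i.
Arguments Fp {R} i.
Arguments Fpp {R} i.
Arguments phi {R} i.
Arguments s_action_spec {R} i s.
Arguments pi_action_spec {R} p.

(* Main.v *)
Require Import Defs.
From HB Require Import structures.
From mathcomp Require Import all_boot all_order all_algebra.
From mathcomp Require Import fraction mpoly complex reals.
From mathcomp Require Import ring zify generic_quotient.
Import GRing.Theory Num.Theory.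
Local Open Scope ring_scope.

Section QuotS.
Local Open Scope quotient_scope.
Lemma tofrac_pi (T : idomainType) (n : T) :
  tofrac n = \pi_{fraction T} (Ratio n 1).
Proof. by unlock tofrac. Qed.

Lemma frac_repr (T : idomainType) (x : {fraction T}) :
  exists n d : T, x = tofrac n / tofrac d.
Proof.
elim/quotW: x => r.
exists (\n_r), (\d_r).
rewrite !tofrac_pi.
have E := FracField.pi_mul (Ratio \n_r 1) (FracField.invf (Ratio \d_r 1)).
have E2 := FracField.pi_inv (Ratio \d_r 1).
rewrite /= in E E2.
rewrite -[_^-1]E2.
rewrite -[_ * _]E.
rewrite /FracField.invf /FracField.mulf.
have d0 := denom_ratioP r.
rewrite !numden_Ratio ?oner_neq0 // mulr1 mul1r Ratio_numden.
by []. Qed.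
End QuotS.


Section Morph.
Context {R : realType}.
Context {D : L R -> L R}.
Implicit Types (f fi : L R -> L R) (a b : L R).

Section OneMap.
Context {f fi : L R -> L R}.
Hypothesis H : diff_aut D f fi.

Lemma mD a b : f (a + b) = f a + f b. Proof. by case: H => [[]]. Qed.
Lemma mM a b : f (a * b) = f a * f b. Proof. by case: H => [[]]. Qed.
Lemma m1 : f 1 = 1. Proof. by case: H => [[]]. Qed.
Lemma mC c : f (cst c) = cst c. Proof. by case: H => [[]]. Qed.
Lemma mK : cancel f fi. Proof. by case: H => _ []. Qed.
Lemma mKV : cancel fi f. Proof. by case: H => _ []. Qed.
Lemma mDer a : f (D a) = D (f a). Proof. by case: H => _ []. Qed.
Lemma m0 : f 0 = 0.
Proof. by apply: (addrI (f 0)); rewrite -mD !addr0. Qed.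
Lemma mN a : f (- a) = - f a.
Proof. by apply: (addrI (f a)); rewrite -mD !subrr m0. Qed.
Lemma mB a b : f (a - b) = f a - f b.
Proof. by rewrite mD mN. Qed.
Lemma minj : injective f. Proof. exact: can_inj mK. Qed.
Lemma mneq0 {a} : a != 0 -> f a != 0.
Proof. by apply: contra => /eqP h; apply/eqP; apply: minj; rewrite h m0. Qed.
Lemma mV a : f (a^-1) = (f a)^-1.
Proof.
have [->|a0] := eqVneq a 0; first by rewrite invr0 m0 invr0.
have h : f a * f a^-1 = 1 by rewrite -mM mulfV // m1.
by rewrite -[f a^-1]mul1r -(mulVf (mneq0 a0)) -mulrA h mulr1.
Qed.
Lemma mdiv a b : f (a / b) = f a / f b. Proof. by rewrite mM mV. Qed.
Lemma mX a k : f (a ^+ k) = f a ^+ k.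
Proof. by elim: k => [|k IH]; rewrite ?expr0 ?m1 // !exprS mM IH. Qed.
Lemma mn k : f k%:R = k%:R.
Proof. by elim: k => [|k IH]; rewrite ?m0 // mulrS mD m1 IH. Qed.
Lemma mz (k : int) : f k%:~R = k%:~R.
Proof. by case: k => k; rewrite ?NegzE ?mulrNz ?mN mn. Qed.
End OneMap.

Lemma da_inv f fi : diff_aut D f fi -> diff_aut D fi f.
Proof.
move=> H; have Hi := minj H.
split; split.
- by move=> a b; apply: Hi; rewrite (mD H) !(mKV H).
- by move=> a b; apply: Hi; rewrite (mM H) !(mKV H).
- by apply: Hi; rewrite (m1 H) (mKV H).
- by move=> c; apply: Hi; rewrite (mC H) (mKV H).
- exact: mKV H.
- exact: mK H.
- by move=> a; apply: Hi; rewrite (mDer H) !(mKV H).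
Qed.

Lemma da_comp f fi g gi : diff_aut D f fi -> diff_aut D g gi ->
  diff_aut D (fun a => f (g a)) (fun a => gi (fi a)).
Proof.
move=> Hf Hg; split; split.
- by move=> a b; rewrite (mD Hg) (mD Hf).
- by move=> a b; rewrite (mM Hg) (mM Hf).
- by rewrite (m1 Hg) (m1 Hf).
- by move=> c; rewrite (mC Hg) (mC Hf).
- by move=> a; rewrite (mK Hf) (mK Hg).
- by move=> a; rewrite (mKV Hg) (mKV Hf).
- by move=> a; rewrite (mDer Hg) (mDer Hf).
Qed.

Lemma da_id : diff_aut D id id.
Proof. by split; split. Qed.

Lemma ext f fi g gi : derivation_spec D -> diff_aut D f fi -> diff_aut D g gi ->
  (forall k, (k < 6)%N -> f (gen k) = g (gen k)) -> forall a, f a = g a.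
Proof.
move=> HD Hf Hg hk.
have h9 : forall i : 'I_9, f (tofrac 'X_i) = g (tofrac 'X_i).
  move=> i; rewrite -(inord_val i); change (f (gen i) = g (gen i)).
  case: (ltnP i 6) => hi; first exact: hk.
  have hj : (i - 6 < 3)%N by case: i hi => [[|[|[|[|[|[|[|[|[|]]]]]]]]] //].
  pose j : 'I_3 := Ordinal hj.
  have -> : gen i = taup j by rewrite /taup /= subnKC.
  case: HD => _ _ _ Ht _; rewrite -Ht (mDer Hf) (mDer Hg) hk //.
have hP : forall P, f (tofrac P) = g (tofrac P).
  elim/mpolyind => [|c m P _ _ IH]; first by rewrite tofrac0 (m0 Hf) (m0 Hg).
  rewrite tofracD (mD Hf) (mD Hg) IH; congr (_ + _).
  rewrite -mul_mpolyC tofracM (mM Hf) (mM Hg).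
  rewrite -[tofrac _]/(cst c) (mC Hf) (mC Hg); congr (_ * _).
  rewrite mpolyXE_id rmorph_prod.
  rewrite (big_morph f (mM Hf) (m1 Hf)) (big_morph g (mM Hg) (m1 Hg)).
  by apply: eq_bigr => i _; rewrite rmorphXn (mX Hf) (mX Hg) h9.
by move=> a; have [n [d ->]] := @frac_repr _ a; rewrite (mdiv Hf) (mdiv Hg) !hP.
Qed.
End Morph.
Arguments da_comp {R D f fi g gi}.
Arguments da_inv {R D f fi}.

Section Zpow.
Context {R : realType} {D : L R -> L R} {f fi : L R -> L R}.
Hypothesis H : diff_aut D f fi.

Lemma da_iter (g gi : L R -> L R) (Hg : diff_aut D g gi) k :
  exists hi, diff_aut D (iter k g) hi.
Proof.
elim: k => [|k [hi IH]]; first by exists id; exact: da_id.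
by exists (fun a => hi (gi a)); exact: (da_comp Hg IH).
Qed.

Lemma da_zpow m : exists hi, diff_aut D (zpow f fi m) hi.
Proof. case: m => k; [exact: (da_iter _ _ H) | exact: (da_iter _ _ (da_inv H))]. Qed.

Lemma zpowS m a : zpow f fi (m + 1) a = zpow f fi m (f a).
Proof.
case: m => [k|[|k]].
- by rewrite -PoszD addn1; exact: iterSr.
- by rewrite /= (mK H).
- have -> : Negz k.+1 + 1 = Negz k by rewrite !NegzE; lia.
  by change (iter k.+1 fi a = iter k.+2 fi (f a)); rewrite [RHS]iterSr (mK H).
Qed.

Lemma zpowP m a : zpow f fi (m - 1) a = zpow f fi m (fi a).
Proof. by rewrite -{2}[m](subrK 1) zpowS (mKV H). Qed.

Lemma zpow_comm {g gi} (Hg : diff_aut D g gi) (hc : forall a, g (f a) = f (g a))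
  n a : zpow f fi n (g a) = g (zpow f fi n a).
Proof.
have hci : forall a, g (fi a) = fi (g a).
  by move=> b; apply: (minj H); rewrite -hc !(mKV H).
have it : forall h : L R -> L R, (forall b, g (h b) = h (g b)) ->
    forall k, iter k h (g a) = g (iter k h a).
  by move=> h hh; elim=> //= k IH; rewrite IH hh.
by case: n => k; apply: it.
Qed.

Lemma zpowS' m a : zpow f fi (m + 1) a = f (zpow f fi m a).
Proof. by rewrite zpowS (zpow_comm H). Qed.
Lemma zpowP' m a : zpow f fi (m - 1) a = fi (zpow f fi m a).
Proof.
rewrite zpowP (zpow_comm (da_inv H)) // => b.
by rewrite (mK H) (mKV H).
Qed.

Lemma zpow_lin a c : f a = a + c -> f c = c ->
  forall m, zpow f fi m a = a + m%:~R * c.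
Proof.
move=> ha hc.
have hfi : fi a = a - c.
  by apply: (minj H); rewrite (mKV H) (mB H) ha hc addrK.
have hfic : fi c = c by apply: (minj H); rewrite (mKV H) hc.
have hfn : forall k : int, f (k%:~R * c) = k%:~R * c by move=> k; rewrite (mM H) (mz H) hc.
have hfin : forall k : int, fi (k%:~R * c) = k%:~R * c.
  by move=> k; rewrite (mM (da_inv H)) (mz (da_inv H)) hfic.
elim/int_rec => [|k IH|k IH].
- by rewrite mul0r addr0.
- by rewrite intS addrC zpowS' IH (mD H) ha hfn intrD mulrDl mul1r; ring.
- rewrite intS opprD addrC zpowP' IH (mD (da_inv H)) hfi hfin intrD intrN mulrDl.
  by rewrite mulN1r mulNr; ring.
Qed.
End Zpow.
From mathcomp Require Import ring.

Section Abstract.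
Variable F : fieldType.
Implicit Types (a b c d x y z t u P : F).

Lemma abs_LDM a b da db : a != 0 -> b != 0 ->
  (da * b + a * db) / (a * b) = da / a + db / b.
Proof. by move=> ha hb; field; rewrite ha hb. Qed.

Lemma abs_LDV a b da db : a != 0 -> b != 0 ->
  (da * b^-1 + a * (- db / b ^+ 2)) / (a / b) = da / a - db / b.
Proof. by move=> ha hb; field; rewrite ha hb. Qed.

Lemma abs_DV b db : b != 0 -> b * (- db / b ^+ 2) = - (db * b^-1).
Proof. by move=> hb; field. Qed.

Lemma abs_DFp t u P : t != 0 ->
  t * (P + (u / t) ^+ 2) * t^-1 + u * (- u / t ^+ 2) = P.
Proof. by move=> ht; field. Qed.

Lemma abs_Dphi x a b c A0 A1 : (3 : F) != 0 ->
  (- x * (c - a) - (b - c) * (b - a) - ((3 - A0 - A1) - A0) / 3)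
  - (- x * (a - b) - (c - a) * (c - b) - (A0 - A1) / 3) + 1
  = A0 - (b + c - 2 * a) * (b - c + x).
Proof. by move=> h3; field. Qed.

Lemma abs_N t1 t2 u1 u2 x : t1 != 0 -> t2 != 0 ->
  u1 * t2 - t1 * u2 + x * t1 * t2 = t1 * t2 * (u1 / t1 - u2 / t2 + x).
Proof. by move=> h1 h2; field; rewrite h1 h2. Qed.

Lemma abs_sFp a b c y A0 : y != 0 ->
  b + c + (A0 - (b + c - 2 * a) * y) / y - a = a + A0 / y.
Proof. by move=> h; field. Qed.
End Abstract.

Section AbsGoals.
Variable F : fieldType.
Variables (t0 t1 t2 f0 f1 f2 a0 a1 : F).
Hypotheses (h0 : t0 != 0) (h1 : t1 != 0) (h2 : t2 != 0) (g0 : f0 != 0) (g1 : f1 != 0) (g2 : f2 != 0)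
  (n1 : f2 + a0 / f0 != 0) (n2 : f0 + a1 / f1 != 0) (n3 : f1 - (a0 + a1) / (f0 + a1 / f1) != 0).
Lemma nz1 : f2 * f0 + a0 != 0.
Proof. have -> : f2 * f0 + a0 = (f2 + a0 / f0) * f0 by field. by rewrite mulf_neq0. Qed.
Lemma nz2 : f0 * f1 + a1 != 0.
Proof. have -> : f0 * f1 + a1 = (f0 + a1 / f1) * f1 by field. by rewrite mulf_neq0. Qed.
Lemma nz3 : f1 * (f0 * f1 + a1) - (a0 + a1) * f1 != 0.
Proof.
have -> : f1 * (f0 * f1 + a1) - (a0 + a1) * f1 = (f1 - (a0 + a1) / (f0 + a1 / f1)) * (f0 + a1 / f1) * f1.
  by field; rewrite g1 nz2.
by rewrite !mulf_neq0.
Qed.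


Lemma absG1 : t1 * t2 * f0 / t0 * t1 * (f2 + a0 / f0) / (t1 * t2 * f0 / t0 * t1 * (f2 + a0 / f0) / t2) = t2.
Proof. by field; rewrite ?h0 ?h1 ?h2 ?g0 ?g1 ?g2 ?nz1 ?nz2 ?nz3. Qed.
Lemma absG2 : f0 = t0 * (t1 * t2 * f0 / t0) / (t1 * t2).
Proof. by field; rewrite ?h0 ?h1 ?h2 ?g0 ?g1 ?g2 ?nz1 ?nz2 ?nz3. Qed.
Lemma absG3 : f1 = t1 * (t2 * t0 * f1 / t1) / (t2 * t0).
Proof. by field; rewrite ?h0 ?h1 ?h2 ?g0 ?g1 ?g2 ?nz1 ?nz2 ?nz3. Qed.
Lemma absG4 : t2 * t0 * f1 / t1 * t2 * (f0 + a1 / f1) / (t2 * t0 * f1 / t1 * t2 * (f0 + a1 / f1) / t0) = t0.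
Proof. by field; rewrite ?h0 ?h1 ?h2 ?g0 ?g1 ?g2 ?nz1 ?nz2 ?nz3. Qed.
Lemma absG5 : f0 + a1 / f1 = t0 * (t2 * t0 * f1 / t1 * t2 * (f0 + a1 / f1) / t0) / (t2 * t0 * f1 / t1 * t2).
Proof. by field; rewrite ?h0 ?h1 ?h2 ?g0 ?g1 ?g2 ?nz1 ?nz2 ?nz3. Qed.
Lemma absG6 : (f0 - (3 - a0 - a1 + a0) / (f2 + a0 / f0) - - (3 - a0 - a1 + a0) / (f2 + a0 / f0)) * t1 * (t1 * t2 * f0 / t0 * t1 * (f2 + a0 / f0) / (t1 * t2 * f0 / t0 * t1 * (f2 + a0 / f0) / t2)) / (t1 * t2 * f0 / t0) = t0.
Proof. by field; rewrite ?h0 ?h1 ?h2 ?g0 ?g1 ?g2 ?nz1 ?nz2 ?nz3. Qed.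
Lemma absC1 : t1 * t2 * f0 / t0 = t2 * (t2 * t0 * f1 / t1 * t2 * (f0 + a1 / f1) / t0) * (f1 - (a0 + a1) / (f0 + a1 / f1)) / (t2 * t0 * f1 / t1) * t2 * (f0 + a1 / f1 + (- a1 + (a0 + a1)) / (f1 - (a0 + a1) / (f0 + a1 / f1))) / (t2 * t0 * f1 / t1 * t2 * (f0 + a1 / f1) / t0).
Proof. by field; rewrite ?h0 ?h1 ?h2 ?g0 ?g1 ?g2 ?nz1 ?nz2 ?nz3. Qed.
Lemma absC2 : t1 * t2 * f0 / t0 * t1 * (f2 + a0 / f0) / (t1 * t2 * f0 / t0 * t1 * (f2 + a0 / f0) / t2) * (t1 * t2 * f0 / t0) * (f1 - a0 / f0 + (3 - a0 - a1 + a0) / (f2 + a0 / f0) + - (3 - a0 - a1 + a0) / (f2 + a0 / f0)) / t1 = t2 * (t2 * t0 * f1 / t1 * t2 * (f0 + a1 / f1) / t0) * (f1 - (a0 + a1) / (f0 + a1 / f1)) / (t2 * t0 * f1 / t1).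
Proof. by field; rewrite ?h0 ?h1 ?h2 ?g0 ?g1 ?g2 ?nz1 ?nz2 ?nz3. Qed.
End AbsGoals.

Lemma absE1 (F : fieldType) (u a b c : F) : a != 0 -> b != 0 -> c != 0 ->
  u = a * (b * c * u / a) / (b * c).
Proof. by move=> ha hb hc; field; rewrite ha hb hc. Qed.
Lemma absE2 (F : fieldType) (u a b c : F) : a != 0 -> b != 0 -> c != 0 ->
  u = a * (u * b * c / a) / (b * c).
Proof. by move=> ha hb hc; field; rewrite ha hb hc. Qed.
Lemma add11 (m : int) : m + 1 + 1 = m + 2. Proof. by rewrite -addrA. Qed.


Lemma i11 (i : 'I_3) : i + 1 + 1 = i + 2.
Proof. by rewrite -addrA (_ : (1 + 1 : 'I_3) = 2) //; apply/val_inj. Qed.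
Lemma i12 (i : 'I_3) : i + 1 + 2 = i.
Proof. by rewrite -addrA (_ : 1 + 2 = 0) ?addr0 //; apply/val_inj. Qed.
Lemma i21 (i : 'I_3) : i + 2 + 1 = i.
Proof. by rewrite -addrA (_ : 2 + 1 = 0) ?addr0 //; apply/val_inj. Qed.
Lemma i22 (i : 'I_3) : i + 2 + 2 = i + 1.
Proof. by rewrite -addrA (_ : (2 + 2 : 'I_3) = 1) //; apply/val_inj. Qed.
Lemma i1n (i : 'I_3) : (i + 1 == i) = false.
Proof. by apply/negbTE/eqP => /(congr1 (fun z => z - i)); rewrite /= addrAC !subrr add0r => /eqP. Qed.
Lemma i2n (i : 'I_3) : (i + 2 == i) = false.
Proof. by apply/negbTE/eqP => /(congr1 (fun z => z - i)); rewrite /= addrAC !subrr add0r => /eqP. Qed.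

Lemma o11 : (1 + 1 : 'I_3) = 2. Proof. by apply/eqP. Qed.
Lemma o12 : (1 + 2 : 'I_3) = 0. Proof. by apply/eqP. Qed.
Lemma o21 : (2 + 1 : 'I_3) = 0. Proof. by apply/eqP. Qed.
Lemma o22 : (2 + 2 : 'I_3) = 1. Proof. by apply/eqP. Qed.
Lemma I3cases (i : 'I_3) : [\/ i = 0, i = 1 | i = 2].
Proof. by case: i => [[|[|[|]]] hi]; [constructor 1|constructor 2|constructor 3|by []]; apply/eqP. Qed.

Section Main.
Context {R : realType} {D : L R -> L R}.
Hypothesis HD : derivation_spec D.

Lemma DD a b : D (a + b) = D a + D b. Proof. by case: HD => [[]]. Qed.
Lemma DM a b : D (a * b) = D a * b + a * D b. Proof. by case: HD => [[]]. Qed.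
Lemma DC c : D (cst c) = 0. Proof. by case: HD => [[]]. Qed.
Lemma Dalpha i : D (alpha i) = 0. Proof. by case: HD. Qed.
Lemma Dx : D xx = 1. Proof. by case: HD. Qed.
Lemma Dtau i : D (tau i) = taup i. Proof. by case: HD. Qed.
Lemma Dtaup i : D (taup i) = tau i * (Fpp i + Fp i ^+ 2). Proof. by case: HD. Qed.
Lemma D0 : D 0 = 0.
Proof. by apply: (addrI (D 0)); rewrite -DD !addr0. Qed.
Lemma DN a : D (- a) = - D a.
Proof. by apply: (addrI (D a)); rewrite -DD !subrr D0. Qed.
Lemma DB a b : D (a - b) = D a - D b. Proof. by rewrite DD DN. Qed.
Lemma cst1 : cst 1 = 1 :> L R.
Proof. by rewrite /cst mpolyC1 tofrac1. Qed.
Lemma D1 : D 1 = 0. Proof. by rewrite -cst1 DC. Qed.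
Lemma DV b : b != 0 -> D (b^-1) = - D b / b ^+ 2.
Proof.
move=> hb; have h : D b * b^-1 + b * D b^-1 = 0 by rewrite -DM mulfV // D1.
have h2 : b * D b^-1 = b * (- D b / b ^+ 2).
  have E : b * (- D b / b ^+ 2) = - (D b * b^-1) by apply: abs_DV.
  by rewrite E; apply: (addrI (D b * b^-1)); rewrite h subrr.
by apply: (mulfI hb).
Qed.
Lemma LDM a b : a != 0 -> b != 0 -> D (a * b) / (a * b) = D a / a + D b / b.
Proof. move=> ha hb; rewrite DM; exact: abs_LDM ha hb. Qed.
Lemma LDV a b : a != 0 -> b != 0 -> D (a / b) / (a / b) = D a / a - D b / b.
Proof. move=> ha hb; rewrite DM (DV _ hb); exact: abs_LDV ha hb. Qed.

Lemma FpE j : Fp j = D (tau j) / tau j. Proof. by rewrite Dtau. Qed.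

Lemma gen_neq0 k : (k < 9)%N -> gen k != 0 :> L R.
Proof.
move=> hk; rewrite /gen tofrac_eq0; apply/eqP => h.
have := @mcoeffXU 9 (CC R) (inord k : 'I_9) (inord k : 'I_9).
by rewrite h mcoeff0 eqxx => /eqP; rewrite eq_sym oner_eq0.
Qed.
Lemma tau_neq0 i : tau i != 0 :> L R.
Proof. by apply: gen_neq0; case: i => [[|[|[|]]]]. Qed.
Lemma three_neq0 : (3 : L R) != 0.
Proof.
rewrite -(rmorph_nat (@tofrac _)) tofrac_eq0 -(rmorph_nat (@mpolyC 9 (CC R))).
by rewrite mpolyC_eq0 pnatr_eq0.
Qed.
Lemma alpha0E : alpha 0 = alpha0 :> L R. Proof. by []. Qed.
Lemma alpha1E : alpha 1 = alpha1 :> L R. Proof. by []. Qed.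
Lemma alpha2E : alpha 2 = 3 - alpha 0 - alpha 1 :> L R. Proof. by []. Qed.
Lemma alpha0_neq0 : alpha 0 != 0 :> L R. Proof. exact: gen_neq0. Qed.
Lemma alpha1_neq0 : alpha 1 != 0 :> L R. Proof. exact: gen_neq0. Qed.

Lemma alphaI (i : 'I_3) : alpha (i + 2) = 3 - alpha i - alpha (i + 1) :> L R.
Proof.
by case: (I3cases i) => ->; rewrite ?add0r ?o11 ?o12 ?o21 ?o22 alpha2E; ring.
Qed.

Lemma DFp j : D (Fp j) = Fpp j.
Proof.
rewrite /Fp DM DV ?tau_neq0 // Dtaup Dtau; apply: abs_DFp; exact: tau_neq0.
Qed.

Lemma Dphi i : D (phi i) =
  alpha i - (Fp (i + 1) + Fp (i + 2) - 2 * Fp i) * phi i.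
Proof.
rewrite /phi !DD !DN !DFp Dx /Fpp i11 i12 i21 i22 alphaI.
by apply: abs_Dphi; exact: three_neq0.
Qed.

Lemma mFp {f fi} (H : diff_aut D f fi) j : f (Fp j) = D (f (tau j)) / f (tau j).
Proof. by rewrite FpE (mdiv H) (mDer H). Qed.
Lemma phiE j : phi j = Fp (j + 1) - Fp (j + 2) + xx :> L R. Proof. by []. Qed.

Section Maps.
Context {s sinv : 'I_3 -> L R -> L R} {p pinv : L R -> L R}.
Hypotheses (Hs : forall i, diff_aut D (s i) (sinv i))
  (Hsa : forall i, s_action_spec i (s i))
  (Hp : diff_aut D p pinv) (Hpa : pi_action_spec p).

Lemma sx i : s i xx = xx. Proof. by case: (Hsa i). Qed.
Lemma salpha_i i : s i (alpha i) = - alpha i. Proof. by case: (Hsa i). Qed.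
Lemma salpha_j i j : j != i -> s i (alpha j) = alpha j + alpha i.
Proof. by case: (Hsa i) => _ _ h _ _; apply: h. Qed.
Lemma stau_j i j : j != i -> s i (tau j) = tau j.
Proof. by case: (Hsa i) => _ _ _ _ h; apply: h. Qed.
Lemma px : p xx = xx. Proof. by case: Hpa. Qed.
Lemma palpha j : p (alpha j) = alpha (j + 1). Proof. by case: Hpa. Qed.
Lemma ptau j : p (tau j) = tau (j + 1). Proof. by case: Hpa. Qed.

Lemma pFp j : p (Fp j) = Fp (j + 1).
Proof. by rewrite (mFp Hp) ptau -FpE. Qed.
Lemma pphi j : p (phi j) = phi (j + 1).
Proof. by rewrite !phiE (mD Hp) (mB Hp) !pFp px i11 i12 i21. Qed.

Lemma phi_neq0 i : phi i != 0 :> L R.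
Proof.
have h01 : forall k, alpha k != 0 :> L R -> phi k != 0 :> L R.
  move=> k hk; apply/eqP => h; move: (Dphi k); rewrite h D0 mulr0 subr0 => h'.
  by move: hk; rewrite -h' eqxx.
case: (I3cases i) => ->; first exact: h01 alpha0_neq0.
  exact: h01 alpha1_neq0.
by rewrite -o11 -pphi; apply: (mneq0 Hp); exact: h01 alpha1_neq0.
Qed.

Lemma sFp_j i j : j != i -> s i (Fp j) = Fp j.
Proof. by move=> h; rewrite (mFp (Hs i)) stau_j // -FpE. Qed.

Lemma stau_i i : s i (tau i) = tau (i + 1) * tau (i + 2) * phi i / tau i.
Proof.
case: (Hsa i) => _ _ _ -> _.
have E : taup (i + 1) * tau (i + 2) - tau (i + 1) * taup (i + 2)
   + xx * tau (i + 1) * tau (i + 2) = tau (i + 1) * tau (i + 2) * phi i :> L R.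
  by rewrite /phi; apply: abs_N; exact: tau_neq0.
by rewrite E.
Qed.

Lemma sFp_i i : s i (Fp i) = Fp i + alpha i / phi i.
Proof.
have h1 := tau_neq0 (i + 1); have h2 := tau_neq0 (i + 2).
have h0 := tau_neq0 i; have hp := phi_neq0 i.
have h12 : tau (i + 1) * tau (i + 2) != 0 :> L R := mulf_neq0 h1 h2.
have h123 : tau (i + 1) * tau (i + 2) * phi i != 0 :> L R := mulf_neq0 h12 hp.
rewrite (mFp (Hs i)) stau_i (LDV _ _ h123 h0) (LDM _ _ h12 hp) (LDM _ _ h1 h2).
rewrite -!FpE Dphi.
exact: abs_sFp hp.
Qed.

Lemma sphi_i i : s i (phi i) = phi i.
Proof.
by rewrite !phiE (mD (Hs i)) (mB (Hs i)) sx !sFp_j // ?i1n ?i2n.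
Qed.
Lemma sphi_1 i : s i (phi (i + 1)) = phi (i + 1) - alpha i / phi i.
Proof.
rewrite [in LHS]phiE i11 i12 (mD (Hs i)) (mB (Hs i)) sx sFp_i sFp_j ?i2n //.
rewrite (phiE (i + 1)) i11 i12; ring.
Qed.
Lemma sphi_2 i : s i (phi (i + 2)) = phi (i + 2) + alpha i / phi i.
Proof.
rewrite [in LHS]phiE i21 i22 (mD (Hs i)) (mB (Hs i)) sx sFp_i sFp_j ?i1n //.
rewrite (phiE (i + 2)) i21 i22; ring.
Qed.
Lemma s0t0 : s 0 (tau 0) = tau 1 * tau 2 * phi 0 / tau 0 :> L R.
Proof. by move: (stau_i 0); rewrite ?add0r ?o11 ?o12 ?o21 ?o22. Qed.
Lemma s0f0 : s 0 (phi 0) = phi 0 :> L R.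
Proof. exact: sphi_i. Qed.
Lemma s0a0 : s 0 (alpha 0) = - alpha 0 :> L R.
Proof. exact: salpha_i. Qed.
Lemma s0t1 : s 0 (tau 1) = tau 1 :> L R.
Proof. exact: stau_j. Qed.
Lemma s0f1 : s 0 (phi 1) = phi 1 - alpha 0 / phi 0 :> L R.
Proof. by move: (sphi_1 0); rewrite ?add0r ?o11 ?o12 ?o21 ?o22. Qed.
Lemma s0a1 : s 0 (alpha 1) = alpha 1 + alpha 0 :> L R.
Proof. exact: salpha_j. Qed.
Lemma s0t2 : s 0 (tau 2) = tau 2 :> L R.
Proof. exact: stau_j. Qed.
Lemma s0f2 : s 0 (phi 2) = phi 2 + alpha 0 / phi 0 :> L R.
Proof. by move: (sphi_2 0); rewrite ?add0r ?o11 ?o12 ?o21 ?o22. Qed.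
Lemma s0a2 : s 0 (alpha 2) = alpha 2 + alpha 0 :> L R.
Proof. exact: salpha_j. Qed.
Lemma s0x : s 0 xx = xx :> L R. Proof. exact: sx. Qed.
Lemma s1t0 : s 1 (tau 0) = tau 0 :> L R.
Proof. exact: stau_j. Qed.
Lemma s1f0 : s 1 (phi 0) = phi 0 + alpha 1 / phi 1 :> L R.
Proof. by move: (sphi_2 1); rewrite ?add0r ?o11 ?o12 ?o21 ?o22. Qed.
Lemma s1a0 : s 1 (alpha 0) = alpha 0 + alpha 1 :> L R.
Proof. exact: salpha_j. Qed.
Lemma s1t1 : s 1 (tau 1) = tau 2 * tau 0 * phi 1 / tau 1 :> L R.
Proof. by move: (stau_i 1); rewrite ?add0r ?o11 ?o12 ?o21 ?o22. Qed.
Lemma s1f1 : s 1 (phi 1) = phi 1 :> L R.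
Proof. exact: sphi_i. Qed.
Lemma s1a1 : s 1 (alpha 1) = - alpha 1 :> L R.
Proof. exact: salpha_i. Qed.
Lemma s1t2 : s 1 (tau 2) = tau 2 :> L R.
Proof. exact: stau_j. Qed.
Lemma s1f2 : s 1 (phi 2) = phi 2 - alpha 1 / phi 1 :> L R.
Proof. by move: (sphi_1 1); rewrite ?add0r ?o11 ?o12 ?o21 ?o22. Qed.
Lemma s1a2 : s 1 (alpha 2) = alpha 2 + alpha 1 :> L R.
Proof. exact: salpha_j. Qed.
Lemma s1x : s 1 xx = xx :> L R. Proof. exact: sx. Qed.
Lemma s2t0 : s 2 (tau 0) = tau 0 :> L R.
Proof. exact: stau_j. Qed.
Lemma s2f0 : s 2 (phi 0) = phi 0 - alpha 2 / phi 2 :> L R.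
Proof. by move: (sphi_1 2); rewrite ?add0r ?o11 ?o12 ?o21 ?o22. Qed.
Lemma s2a0 : s 2 (alpha 0) = alpha 0 + alpha 2 :> L R.
Proof. exact: salpha_j. Qed.
Lemma s2t1 : s 2 (tau 1) = tau 1 :> L R.
Proof. exact: stau_j. Qed.
Lemma s2f1 : s 2 (phi 1) = phi 1 + alpha 2 / phi 2 :> L R.
Proof. by move: (sphi_2 2); rewrite ?add0r ?o11 ?o12 ?o21 ?o22. Qed.
Lemma s2a1 : s 2 (alpha 1) = alpha 1 + alpha 2 :> L R.
Proof. exact: salpha_j. Qed.
Lemma s2t2 : s 2 (tau 2) = tau 0 * tau 1 * phi 2 / tau 2 :> L R.
Proof. by move: (stau_i 2); rewrite ?add0r ?o11 ?o12 ?o21 ?o22. Qed.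
Lemma s2f2 : s 2 (phi 2) = phi 2 :> L R.
Proof. exact: sphi_i. Qed.
Lemma s2a2 : s 2 (alpha 2) = - alpha 2 :> L R.
Proof. exact: salpha_i. Qed.
Lemma s2x : s 2 xx = xx :> L R. Proof. exact: sx. Qed.
Lemma pt0 : p (tau 0) = tau 1 :> L R.
Proof. by move: (ptau 0); rewrite ?add0r ?o11 ?o12 ?o21 ?o22. Qed.
Lemma pf0 : p (phi 0) = phi 1 :> L R.
Proof. by move: (pphi 0); rewrite ?add0r ?o11 ?o12 ?o21 ?o22. Qed.
Lemma pa0 : p (alpha 0) = alpha 1 :> L R.
Proof. by move: (palpha 0); rewrite ?add0r ?o11 ?o12 ?o21 ?o22. Qed.
Lemma pt1 : p (tau 1) = tau 2 :> L R.
Proof. by move: (ptau 1); rewrite ?add0r ?o11 ?o12 ?o21 ?o22. Qed.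
Lemma pf1 : p (phi 1) = phi 2 :> L R.
Proof. by move: (pphi 1); rewrite ?add0r ?o11 ?o12 ?o21 ?o22. Qed.
Lemma pa1 : p (alpha 1) = alpha 2 :> L R.
Proof. by move: (palpha 1); rewrite ?add0r ?o11 ?o12 ?o21 ?o22. Qed.
Lemma pt2 : p (tau 2) = tau 0 :> L R.
Proof. by move: (ptau 2); rewrite ?add0r ?o11 ?o12 ?o21 ?o22. Qed.
Lemma pf2 : p (phi 2) = phi 0 :> L R.
Proof. by move: (pphi 2); rewrite ?add0r ?o11 ?o12 ?o21 ?o22. Qed.
Lemma pa2 : p (alpha 2) = alpha 0 :> L R.
Proof. by move: (palpha 2); rewrite ?add0r ?o11 ?o12 ?o21 ?o22. Qed.
Lemma ppx : p xx = xx :> L R. Proof. exact: px. Qed.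

Definition tabs := (s0t0, s0f0, s0a0, s0t1, s0f1, s0a1, s0t2, s0f2, s0a2, s0x, s1t0, s1f0, s1a0, s1t1, s1f1, s1a1, s1t2, s1f2, s1a2, s1x, s2t0, s2f0, s2a0, s2t1, s2f1, s2a1, s2t2, s2f2, s2a2, s2x, pt0, pf0, pa0, pt1, pf1, pa1, pt2, pf2, pa2, ppx).

Local Opaque phi tau alpha xx taup gen.
Set Printing Width 10000.
Ltac expand := rewrite /T1 /T2 ?(tabs, (mD (Hs _)), (mN (Hs _)), (mM (Hs _)), (mV (Hs _)), (mD Hp), (mN Hp), (mM Hp), (mV Hp)).


Lemma HT1 : diff_aut D (T1 s p) (T1inv sinv pinv).
Proof. exact: (da_comp Hp (da_comp (Hs 2) (Hs 1))). Qed.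
Lemma HT2 : diff_aut D (T2 s p) (T2inv sinv pinv).
Proof. exact: (da_comp (Hs 1) (da_comp Hp (Hs 2))). Qed.

Lemma N1 : phi 2 + alpha 0 / phi 0 != 0 :> L R.
Proof. have := mneq0 HT1 (phi_neq0 1). expand. exact: id. Qed.
Lemma N2 : phi 0 + alpha 1 / phi 1 != 0 :> L R.
Proof. have := mneq0 (Hs 1) (phi_neq0 0). expand. exact: id. Qed.
Lemma N3 : phi 1 - (alpha 0 + alpha 1) / (phi 0 + alpha 1 / phi 1) != 0 :> L R.
Proof. have := mneq0 HT2 (phi_neq0 0). expand. exact: id. Qed.

Ltac nzs := match goal with
 | |- is_true (tau ?i != 0) => exact: (tau_neq0 i)
 | |- is_true (phi ?i != 0) => exact: (phi_neq0 i)
 | |- is_true (phi 2 + _ != 0) => exact: N1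
 | |- is_true (phi 0 + _ != 0) => exact: N2
 | |- is_true (phi 1 - _ != 0) => exact: N3
end.
Lemma G1 : T1 s p (T2 s p (tau 0)) = tau 2 :> L R.
Proof. expand; rewrite ?alpha2E; apply: absG1; nzs. Qed.
Lemma G2 : phi 0 = tau 0 * T1 s p (tau 2) / (tau 1 * tau 2) :> L R.
Proof. expand; rewrite ?alpha2E; apply: absG2; nzs. Qed.
Lemma G3 : phi 1 = tau 1 * T2 s p (tau 0) / (tau 2 * tau 0) :> L R.
Proof. expand; rewrite ?alpha2E; apply: absG3; nzs. Qed.
Lemma G4 : T2 s p (tau 0 * tau 1 * phi 2 / tau 2) = tau 0 :> L R.
Proof. expand; rewrite ?alpha2E; apply: absG4; nzs. Qed.
Lemma G5 : s 1 (phi 0) = tau 0 * T2 s p (tau 2) / (T2 s p (tau 0) * tau 2) :> L R.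
Proof. expand; rewrite ?alpha2E; apply: absG5; nzs. Qed.
Lemma G6 : T1 s p (s 1 (phi 2) * tau 0 * T2 s p (tau 0) / tau 2) = tau 0 :> L R.
Proof. expand; rewrite ?alpha2E; apply: absG6; nzs. Qed.
Lemma C1 : T1 s p (T2 s p (tau 1)) = T2 s p (T1 s p (tau 1)) :> L R.
Proof. expand; rewrite ?alpha2E; apply: absC1; nzs. Qed.
Lemma C2 : T1 s p (T2 s p (tau 2)) = T2 s p (T1 s p (tau 2)) :> L R.
Proof. expand; rewrite ?alpha2E; apply: absC2; nzs. Qed.
Lemma G7 : s 1 (tau 1) = T2 s p (tau 0) :> L R.
Proof. by expand. Qed.
Lemma A1 : T1 s p (alpha 0) = alpha 0 + 3 :> L R.
Proof. expand; rewrite alpha2E; ring. Qed.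
Lemma A2 : T1 s p (alpha 1) = alpha 1 - 3 :> L R.
Proof. expand; rewrite alpha2E; ring. Qed.
Lemma A3 : T2 s p (alpha 0) = alpha 0 :> L R.
Proof. expand; ring. Qed.
Lemma A4 : T2 s p (alpha 1) = alpha 1 + 3 :> L R.
Proof. expand; rewrite alpha2E; ring. Qed.

Lemma T1t0 : T1 s p (tau 0) = tau 1 :> L R. Proof. by expand. Qed.
Lemma T2t1 : T2 s p (tau 1) = tau 2 :> L R. Proof. by expand. Qed.

Lemma Comm a : T1 s p (T2 s p a) = T2 s p (T1 s p a).
Proof.
apply: (ext _ _ _ _ HD (da_comp HT1 HT2) (da_comp HT2 HT1)) => k hk.
case: k hk => [|[|[|[|[|[|k]]]]]] // _.
- change (gen 0) with (alpha 0 : L R).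
  by rewrite A3 A1 (mD HT2) A3 (mn HT2).
- change (gen 1) with (alpha 1 : L R).
  rewrite A4 A2 (mD HT1) (mB HT2) A2 A4 (mn HT1) (mn HT2); ring.
- change (gen 2) with (xx : L R); by expand.
- change (gen 3) with (tau 0 : L R); by rewrite G1 T1t0 T2t1.
- change (gen 4) with (tau 1 : L R); exact: C1.
- change (gen 5) with (tau 2 : L R); exact: C2.
Qed.

Lemma Commi a : T1inv sinv pinv (T2 s p a) = T2 s p (T1inv sinv pinv a).
Proof. by apply: (minj HT1); rewrite (mKV HT1) Comm (mKV HT1). Qed.

Notation w := (wmn s sinv p pinv).
Lemma WT1 m n a : w m n (T1 s p a) = w (m + 1) n a.
Proof. by rewrite /wmn (zpow_comm HT2 HT1 Comm) -(zpowS HT1). Qed.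
Lemma WT2 m n a : w m n (T2 s p a) = w m (n + 1) a.
Proof. by rewrite /wmn -(zpowS HT2). Qed.
Lemma WT1i m n a : w m n (T1inv sinv pinv a) = w (m - 1) n a.
Proof. by rewrite /wmn (zpow_comm HT2 (da_inv HT1) Commi) -(zpowP HT1). Qed.
Lemma WT2i m n a : w m n (T2inv sinv pinv a) = w m (n - 1) a.
Proof. by rewrite /wmn -(zpowP HT2). Qed.

Lemma Hw m n : exists wi, diff_aut D (w m n) wi.
Proof.
have [g1 H1] := da_zpow HT1 m; have [g2 H2] := da_zpow HT2 n.
by exists (fun a => g2 (g1 a)); exact: (da_comp H1 H2).
Qed.

Lemma T2inv_t0 : T2inv sinv pinv (tau 0) = tau 0 * tau 1 * phi 2 / tau 2 :> L R.
Proof. by rewrite -{1}G4 (mK HT2). Qed.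
Lemma T1inv_t0 :
  T1inv sinv pinv (tau 0) = s 1 (phi 2) * tau 0 * T2 s p (tau 0) / tau 2 :> L R.
Proof. by rewrite -{1}G6 (mK HT1). Qed.

Lemma P0 : phi 0 = tau 0 * T1 s p (T1 s p (T2 s p (tau 0)))
   / (T1 s p (tau 0) * T1 s p (T2 s p (tau 0))) :> L R.
Proof. rewrite G1 T1t0; exact: G2. Qed.
Lemma P1 : phi 1 = T1 s p (tau 0) * T2 s p (tau 0)
   / (T1 s p (T2 s p (tau 0)) * tau 0) :> L R.
Proof. rewrite G1 T1t0; exact: G3. Qed.
Lemma P2 : phi 2 = T1 s p (T2 s p (tau 0)) * T2inv sinv pinv (tau 0)
   / (tau 0 * T1 s p (tau 0)) :> L R.
Proof. rewrite G1 T1t0 T2inv_t0; apply: absE1; exact: tau_neq0. Qed.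
Lemma Q0 : s 1 (phi 0) = tau 0 * T2 s p (T1 s p (T2 s p (tau 0)))
   / (T2 s p (tau 0) * T1 s p (T2 s p (tau 0))) :> L R.
Proof. rewrite G1; exact: G5. Qed.
Lemma Q1 : s 1 (phi 1) = T2 s p (tau 0) * T1 s p (tau 0)
   / (T1 s p (T2 s p (tau 0)) * tau 0) :> L R.
Proof. by rewrite s1f1 P1 [T2 s p (tau 0) * _]mulrC. Qed.
Lemma Q2 : s 1 (phi 2) = T1 s p (T2 s p (tau 0)) * T1inv sinv pinv (tau 0)
   / (tau 0 * T2 s p (tau 0)) :> L R.
Proof.
rewrite G1 T1inv_t0; apply: absE2; try exact: tau_neq0.
exact: (mneq0 HT2 (tau_neq0 0)).
Qed.

Lemma Wa0 m n : w m n (alpha 0) = alpha 0 + 3 * m%:~R.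
Proof.
rewrite /wmn (zpow_lin HT2 _ 0) ?A3 ?addr0 ?(m0 HT2) // mulr0 addr0.
rewrite (zpow_lin HT1 _ 3) ?A1 ?(mn HT1) //; ring.
Qed.
Lemma Wa1 m n : w m n (alpha 1) = alpha 1 + 3 * (n - m)%:~R.
Proof.
have [zi Hz] := da_zpow HT1 m.
rewrite /wmn (zpow_lin HT2 _ 3) ?A4 ?(mn HT2) //.
rewrite (mD Hz) (mM Hz) (mz Hz) (mn Hz).
rewrite (zpow_lin HT1 _ (-3)) ?A2 ?(mN HT1) ?(mn HT1) // intrB; ring.
Qed.
Lemma Wa2 m n : w m n (alpha 2) = alpha 2 - 3 * n%:~R.
Proof.
have [wi Hw'] := Hw m n.
rewrite alpha2E (mB Hw') (mB Hw') (mn Hw') Wa0 Wa1 intrB; ring.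
Qed.

Lemma main_sec :
  let tt := taumn s sinv p pinv in
  let w := wmn s sinv p pinv in
  let w' := wmn' s sinv p pinv in
  forall m n : int,
  [/\ w m n (tau 0) = tt m n,
      w m n (tau 1) = tt (m + 1) n &
      w m n (tau 2) = tt (m + 1) (n + 1)] /\
  [/\ w m n (alpha 0) = alpha 0 + 3 * m%:~R,
      w m n (alpha 1) = alpha 1 + 3 * (n - m)%:~R &
      w m n (alpha 2) = alpha 2 - 3 * n%:~R] /\
  [/\ w' m n (tau 0) = tt m n,
      w' m n (tau 1) = tt m (n + 1) &
      w' m n (tau 2) = tt (m + 1) (n + 1)] /\
  [/\ w' m n (alpha 0) = alpha 0 + alpha 1 + 3 * n%:~R,
      w' m n (alpha 1) = - alpha 1 + 3 * (m - n)%:~R &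
      w' m n (alpha 2) = alpha 1 + alpha 2 - 3 * m%:~R] /\
  [/\ w m n (phi 0) = tt m n * tt (m + 2) (n + 1) / (tt (m + 1) n * tt (m + 1) (n + 1)),
      w m n (phi 1) = tt (m + 1) n * tt m (n + 1) / (tt (m + 1) (n + 1) * tt m n) &
      w m n (phi 2) = tt (m + 1) (n + 1) * tt m (n - 1) / (tt m n * tt (m + 1) n)] /\
  [/\ w' m n (phi 0) = tt m n * tt (m + 1) (n + 2) / (tt m (n + 1) * tt (m + 1) (n + 1)),
      w' m n (phi 1) = tt m (n + 1) * tt (m + 1) n / (tt (m + 1) (n + 1) * tt m n) &
      w' m n (phi 2) = tt (m + 1) (n + 1) * tt (m - 1) n / (tt m n * tt m (n + 1))].
Proof.
move=> tt w0 w' m n; rewrite /tt /w0 /w' /taumn /wmn'.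
have [wi Hw'] := Hw m n.
have E2 : tau 2 = T1 s p (T2 s p (tau 0)) :> L R by rewrite G1.
have E1 : tau 1 = T1 s p (tau 0) :> L R by rewrite T1t0.
split; [|split; [|split; [|split; [|split]]]].
- split => //; first by rewrite E1 WT1.
  by rewrite E2 WT1 WT2.
- by split; [exact: Wa0 | exact: Wa1 | exact: Wa2].
- split; first by rewrite s1t0.
    by rewrite G7 WT2.
  by rewrite s1t2 E2 WT1 WT2.
- split.
  + rewrite s1a0 (mD Hw') Wa0 Wa1 intrB; ring.
  + rewrite s1a1 (mN Hw') Wa1 !intrB; ring.
  + rewrite s1a2 (mD Hw') Wa1 Wa2 intrB; ring.
- split.
  + by rewrite P0 !(mM Hw', mV Hw') !(WT1, WT2) -[m + 1 + 1]addrA.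
  + by rewrite P1 !(mM Hw', mV Hw') !(WT1, WT2).
  + by rewrite P2 !(mM Hw', mV Hw') !(WT1, WT2, WT2i).
- split.
  + by rewrite Q0 !(mM Hw', mV Hw') !(WT1, WT2) -[n + 1 + 1]addrA.
  + by rewrite Q1 !(mM Hw', mV Hw') !(WT1, WT2).
  + by rewrite Q2 !(mM Hw', mV Hw') !(WT1, WT2, WT1i).
Qed.
End Maps.
End Main.

Theorem proposition4p1 (R : realType) (D : L R -> L R)
  (s sinv : 'I_3 -> L R -> L R) (p pinv : L R -> L R) :
  derivation_spec D ->
  (forall i, diff_aut D (s i) (sinv i)) ->
  (forall i, s_action_spec i (s i)) ->
  diff_aut D p pinv -> pi_action_spec p ->
  let tt := taumn s sinv p pinv in
  let w := wmn s sinv p pinv in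
  let w' := wmn' s sinv p pinv in
  forall m n : int,
  (* (1) *)
  [/\ w m n (tau 0) = tt m n,
      w m n (tau 1) = tt (m + 1) n &
      w m n (tau 2) = tt (m + 1) (n + 1)] /\
  [/\ w m n (alpha 0) = alpha 0 + 3 * m%:~R,
      w m n (alpha 1) = alpha 1 + 3 * (n - m)%:~R &
      w m n (alpha 2) = alpha 2 - 3 * n%:~R] /\
  [/\ w' m n (tau 0) = tt m n,
      w' m n (tau 1) = tt m (n + 1) &
      w' m n (tau 2) = tt (m + 1) (n + 1)] /\
  [/\ w' m n (alpha 0) = alpha 0 + alpha 1 + 3 * n%:~R,
      w' m n (alpha 1) = - alpha 1 + 3 * (m - n)%:~R &
      w' m n (alpha 2) = alpha 1 + alpha 2 - 3 * m%:~R] /\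
  (* (2) *)
  [/\ w m n (phi 0) = tt m n * tt (m + 2) (n + 1) / (tt (m + 1) n * tt (m + 1) (n + 1)),
      w m n (phi 1) = tt (m + 1) n * tt m (n + 1) / (tt (m + 1) (n + 1) * tt m n) &
      w m n (phi 2) = tt (m + 1) (n + 1) * tt m (n - 1) / (tt m n * tt (m + 1) n)] /\
  [/\ w' m n (phi 0) = tt m n * tt (m + 1) (n + 2) / (tt m (n + 1) * tt (m + 1) (n + 1)),
      w' m n (phi 1) = tt m (n + 1) * tt (m + 1) n / (tt (m + 1) (n + 1) * tt m n) &
      w' m n (phi 2) = tt (m + 1) (n + 1) * tt (m - 1) n / (tt m n * tt m (n + 1))].
Proof.
move=> HD Hs Hsa Hp Hpa; exact: (main_sec HD Hs Hsa Hp Hpa).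
Qed.
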